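(* Let $\Sigma$ be a ranked alphabet, $B$ a bi-locally finite strong bimonoid and $\mathcal{A}$ a $(\Sigma,B)$-wta. Then $[\![\mathcal{A}]\!]^{\mathrm{run}}=[\![\mathcal{R}(\mathcal{A})]\!]^{\mathrm{run}}$.
   Context: Ranked alphabet $\Sigma$ ($\Sigma^{(0)}\ne\emptyset$), trees $T_\Sigma$, positions $\mathrm{pos}(\xi)$; strong bimonoid $(B,\oplus,\otimes,\mathbb{0},\mathbb{1})$ (commutative monoid $(B,\oplus,\mathbb{0})$, monoid $(B,\otimes,\mathbb{1})$, $\mathbb{0}\ne\mathbb{1}$, $\mathbb{0}$ absorbing). $B$ is bi-locally finite if both $(B,\oplus,\mathbb{0})$ and $(B,\otimes,\mathbb{1})$ are locally finite (every finite subset generates a finite submonoid). For $b\in B$, $nb$ is the $n$-fold sum ($0b=\mathbb{0}$); if $\{nb\mid n\in\mathbb{N}\}$ is finite, the index $i(b)$ is the least $i\ge1$ with $ib=(i+k)b$ for some $k\ge1$ and the period $p(b)$ is the least $p\ge1$ with $i(b)b=(i(b)+p)b$. $(\Sigma,B)$-wta $\mathcal{A}=(Q,\delta,F)$: $Q$ finite nonempty, $\delta_k:Q^k\times\Sigma^{(k)}\times Q\to B$, $F:Q\to B$. Runs $\rho:\mathrm{pos}(\xi)\to Q$ ($R_{\mathcal{A}}(\xi)$; $R_{\mathcal{A}}(q,\xi)$ those with $\rho(\varepsilon)=q$), $\rho|_i(w)=\rho(iw)$, $\mathrm{wt}_{\mathcal{A}}(\rho)=\big(\bigotimes_{i=1}^k\mathrm{wt}_{\mathcal{A}}(\rho|_i)\big)\otimes\delta_k(\rho(1)\dots\rho(k),\sigma,\rho(\varepsilon))$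 for $\xi=\sigma(\xi_1,\dots,\xi_k)$; $[\![\mathcal{A}]\!]^{\mathrm{run}}(\xi)=\bigoplus_{\rho\in R_{\mathcal{A}}(\xi)}\mathrm{wt}_{\mathcal{A}}(\rho)\otimes F_{\rho(\varepsilon)}$. $H_{\mathcal{A}}$: smallest subset of $B$ containing $\bigcup_k\mathrm{im}(\delta_k)$ and closed under $\otimes$. When $H_{\mathcal{A}}$ is finite and every element of $H_{\mathcal{A}}\otimes\mathrm{im}(F)$ has finite order in $(B,\oplus,\mathbb{0})$ (the finite order property; it holds when $B$ is bi-locally finite), define $i_{\mathcal{A}}=\max\{i(b)\mid b\in H_{\mathcal{A}}\otimes\mathrm{im}(F)\}$, $p_{\mathcal{A}}=\mathrm{lcm}\{p(b)\mid b\in H_{\mathcal{A}}\otimes\mathrm{im}(F)\}$, $J_{\mathcal{A}}(n)=n$ if $n<i_{\mathcal{A}}$, else $i_{\mathcal{A}}+((n-i_{\mathcal{A}})\bmod p_{\mathcal{A}})$; $p_\xi(q,b)=|\{\rho\in R_{\mathcal{A}}(q,\xi)\mid\mathrm{wt}_{\mathcal{A}}(\rho)=b\}|$ and $\pi_\xi(q,b)=J_{\mathcal{A}}(p_\xi(q,b))$ for $(q,b)\in Q\times H_{\mathcal{A}}$. $\mathcal{R}(\mathcal{A})=(Q_{\mathcal{R}},\delta_{\mathcal{R}},F_{\mathcal{R}})$: $Q_{\mathcal{R}}=\{\pi_\xi\mid\xi\in T_\Sigma\}$; $(\delta_{\mathcal{R}})_k(\pi_{\xi_1}\dots\pi_{\xi_k},\sigma,\pi)=\mathbb{1}$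 if $\pi=\pi_{\sigma(\xi_1,\dots,\xi_k)}$ and $\mathbb{0}$ otherwise (independent of the choice of the $\xi_i$); $(F_{\mathcal{R}})_{\pi_\xi}=\bigoplus_{(q,b)\in Q\times H_{\mathcal{A}}}\pi_\xi(q,b)(b\otimes F_q)$. *)

(* Defs.v *)
From Stdlib Require Import ClassicalEpsilon.
From Stdlib Require List.
From mathcomp Require Import all_boot.

Set Implicit Arguments.
Unset Strict Implicit.
Unset Printing Implicit Defensive.

Definition asb (P : Prop) : bool :=
  if excluded_middle_informative P then true else false.

(* the least natural number satisfying P (0 if there is none) *)
Definition least (P : nat -> Prop) : nat :=
  epsilon (inhabits 0%N) (fun n => P n /\ forall m, P m -> (n <= m)%N).

Record bimonoid := Bimonoid {
  bcar :> Type;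
  badd : bcar -> bcar -> bcar;
  bmul : bcar -> bcar -> bcar;
  bzero : bcar;
  bone : bcar }.
Arguments badd : clear implicits.
Arguments bmul : clear implicits.
Arguments bzero : clear implicits.
Arguments bone : clear implicits.

Definition strong_bimonoid (B : bimonoid) : Prop :=
  associative (badd B) /\ commutative (badd B) /\
  left_id (bzero B) (badd B) /\ right_id (bzero B) (badd B) /\
  associative (bmul B) /\ left_id (bone B) (bmul B) /\
  right_id (bone B) (bmul B) /\
  bzero B <> bone B /\
  left_zero (bzero B) (bmul B) /\ right_zero (bzero B) (bmul B).

Inductive generated (B : Type) (op : B -> B -> B) (e : B) (s : seq B)
    : B -> Prop :=
  | gen_unit : generated op e s e
  | gen_elem x : List.In x s -> generated op e s x
  | gen_op x y : generated op e s x -> generated op e s y ->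
                 generated op e s (op x y).

Definition locally_finite (B : Type) (op : B -> B -> B) (e : B) : Prop :=
  forall s : seq B, exists l : seq B,
    forall x, generated op e s x -> List.In x l.

Definition bi_locally_finite (B : bimonoid) : Prop :=
  locally_finite (badd B) (bzero B) /\ locally_finite (bmul B) (bone B).

Definition nsum (B : bimonoid) (n : nat) (b : B) : B :=
  iter n (badd B b) (bzero B).

Definition index_of (B : bimonoid) (b : B) : nat :=
  least (fun i => (1 <= i)%N /\
     exists k, (1 <= k)%N /\ nsum i b = nsum (i + k) b).

Definition period_of (B : bimonoid) (b : B) : nat :=
  least (fun p => (1 <= p)%N /\
     nsum (index_of b) b = nsum (index_of b + p) b).

Inductive tree (S : Type) (rk : S -> nat) : Type :=
  | Node (s : S) of ('I_(rk s) -> tree rk).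
Arguments Node {S rk} s _.

(* all choice functions of a family of lists indexed by 'I_k *)
Fixpoint choices (T : Type) (k : nat) : ('I_k -> seq T) -> seq ('I_k -> T) :=
  match k return ('I_k -> seq T) -> seq ('I_k -> T) with
  | 0 => fun _ => [:: fun i : 'I_0 => False_rect T (notF (ltn_ord i))]
  | k'.+1 => fun L =>
      [seq (fun i : 'I_k'.+1 =>
              match unlift ord0 i with Some j => g j | None => x end)
      | x <- L ord0, g <- choices (fun j : 'I_k' => L (lift ord0 j))]
  end.

Section WTA.
Variables (Sigma : Type) (rk : Sigma -> nat) (B : bimonoid).

(* A (Sigma,B)-wta: a finite state set (given as a duplicate-free list
   [wstates] of elements of the carrier [wst]), transition weights
   delta_k(q_1..q_k, sigma, q) = wdelta sigma (q_1..q_k) q, and root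
   weights wfin. *)
Record wta := Wta {
  wst : Type;
  wstates : seq wst;
  wdelta : forall s : Sigma, ('I_(rk s) -> wst) -> wst -> B;
  wfin : wst -> B }.
Arguments wst : clear implicits.
Arguments wstates : clear implicits.
Arguments wdelta : clear implicits.
Arguments wfin : clear implicits.

Variable A : wta.

(* a run on xi is a tree with the same shape as xi whose node at position
   w is labelled (xi(w), rho(w)) *)
Definition rk_run (p : Sigma * wst A) : nat := rk p.1.
Definition run := tree rk_run.

Definition run_root (r : run) : wst A := let: Node p _ := r in p.2.

(* R_A(xi): all runs on xi (each exactly once if wstates is duplicate-free) *)
Fixpoint runs (t : tree rk) : seq run :=
  match t with
  | Node s f =>
      [seq Node (s, q) g | q <- wstates A,
                           g <- choices (fun i => runs (f i))]
  end.

Fixpoint run_wt (r : run) : B :=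
  match r with
  | Node p g =>
      bmul B (\big[bmul B/bone B]_(i < rk p.1) run_wt (g i))
             (wdelta A p.1 (fun i => run_root (g i)) p.2)
  end.

Definition run_sem (t : tree rk) : B :=
  \big[badd B/bzero B]_(r <- runs t) bmul B (run_wt r) (wfin A (run_root r)).

End WTA.

Section RA.
Variables (Sigma : finType) (rk : Sigma -> nat) (B : bimonoid) (Q : finType).
Variables (delta : forall s : Sigma, ('I_(rk s) -> Q) -> Q -> B) (F : Q -> B).

Definition wta_of : wta rk B := Wta (enum Q) delta F.

Inductive HA : B -> Prop :=
  | HA_im s (qs : 'I_(rk s) -> Q) q : HA (delta qs q)
  | HA_mul a b : HA a -> HA b -> HA (bmul B a b).

Definition HAF (b : B) : Prop := exists h q, HA h /\ b = bmul B h (F q).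

Definition iA : nat := least (fun n => forall b, HAF b -> (index_of b <= n)%N).
Definition pA : nat :=
  least (fun n => (1 <= n)%N /\ forall b, HAF b -> (period_of b %| n)%N).

Definition JA (n : nat) : nat :=
  if (n < iA)%N then n else (iA + (n - iA) %% pA)%N.

Definition pcount (t : tree rk) (q : Q) (b : B) : nat :=
  count (fun r : run wta_of => (run_root r == q :> Q) && asb (run_wt r = b)) (runs wta_of t).

(* pi_xi : Q x H_A -> nat, represented as a function Q -> B -> nat that
   vanishes outside Q x H_A *)
Definition Qr := Q -> B -> nat.
Definition piA (t : tree rk) : Qr :=
  fun q b => if asb (HA b) then JA (pcount t q b) else 0%N.

Definition R_states : seq Qr :=
  epsilon (inhabits [::]) (fun l => List.NoDup l /\
     forall pi, List.In pi l <-> exists t, pi = piA t).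

Definition rep (pi : Qr) : option (tree rk) :=
  epsilon (inhabits None)
    (fun o => if o is Some t then piA t = pi else False).

Definition R_delta (s : Sigma) (pis : 'I_(rk s) -> Qr) (pi : Qr) : B :=
  if asb (exists ts : 'I_(rk s) -> tree rk,
            (forall i, rep (pis i) = Some (ts i)) /\ pi = piA (Node s ts))
  then bone B else bzero B.

Definition HA_list : seq B :=
  epsilon (inhabits [::]) (fun l => List.NoDup l /\
     forall b, List.In b l <-> HA b).

Definition R_fin (pi : Qr) : B :=
  \big[badd B/bzero B]_(q <- enum Q)
    \big[badd B/bzero B]_(b <- HA_list) nsum (pi q b) (bmul B b (F q)).

Definition R_of : wta rk B := Wta R_states R_delta R_fin.

End RA.

(* Main.v *)
Require Import Defs.
From Stdlib Require Import ClassicalEpsilon FunctionalExtensionality.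
From Stdlib Require List.
From mathcomp Require Import all_boot.

Set Implicit Arguments.
Unset Strict Implicit.
Unset Printing Implicit Defensive.


Lemma asbT (P : Prop) : P -> asb P = true.
Proof. by rewrite /asb; case: excluded_middle_informative. Qed.
Lemma asbF (P : Prop) : ~ P -> asb P = false.
Proof. by rewrite /asb; case: excluded_middle_informative. Qed.
Lemma asbP (P : Prop) : reflect P (asb P).
Proof. by rewrite /asb; case: excluded_middle_informative => h; constructor. Qed.

Lemma least_spec (P : nat -> Prop) : (exists n, P n) ->
  P (least P) /\ forall m, P m -> (least P <= m)%N.
Proof.
move=> ex; rewrite /least.
apply: (epsilon_spec (inhabits 0%N) (fun n => P n /\ forall m, P m -> (n <= m)%N)).
have ex' : exists n, asb (P n) by case: ex => n Pn; exists n; rewrite asbT.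
case: (ex_minnP ex') => n /asbP Pn minn; exists n; split => // m Pm.
by apply: minn; rewrite asbT.
Qed.

Lemma finite_NoDup (X : Type) (l : seq X) : forall (S : X -> Prop),
  (forall x, S x -> List.In x l) ->
  exists l', List.NoDup l' /\ forall x, List.In x l' <-> S x.
Proof.
elim: l => [|a l IH] S HS.
  by exists [::]; split; [constructor | move=> x; split => // /HS].
have [l' [nd H']] := IH (fun x => S x /\ x <> a)
   (fun x '(conj Sx nxa) => match HS x Sx with
       | or_introl e => False_ind _ (nxa (esym e)) | or_intror h => h end).
case: (classic (S a)) => Sa.
  exists (a :: l'); split.
    by constructor => // /H' [].
  move=> x; split.
    by case=> [<-|/H' []].
  move=> Sx; case: (classic (x = a)) => [->|nxa]; first by left.
  by right; apply/H'.
exists l'; split => // x; split; first by case/H'.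
by move=> Sx; apply/H'; split => // e; apply: Sa; rewrite -e.
Qed.

Lemma mem_In (T : eqType) (x : T) (s : seq T) : x \in s -> List.In x s.
Proof. elim: s => //= a s IH; rewrite inE => /orP [/eqP ->|/IH]; by [left|right]. Qed.

Lemma uniq_NoDup (T : eqType) (s : seq T) : uniq s -> List.NoDup s.
Proof.
elim: s => /= [|a s IH /andP [nas us]]; constructor; last exact: IH.
move=> ias; move/negP: nas; apply.
elim: s ias {IH us} => //= b s IH [->|h]; rewrite inE ?eqxx //.
by rewrite IH ?orbT.
Qed.

Lemma In_pairs (S T R : Type) (f : S -> T -> R) (s : seq S) (t : S -> seq T) x y :
  List.In x s -> List.In y (t x) ->
  List.In (f x y) (flatten [seq [seq f x y | y <- t x] | x <- s]).
Proof.
elim: s => //= a s IH [e hy|hx hy]; apply/List.in_or_app.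
  by subst; left; apply: List.in_map.
by right; apply: IH.
Qed.

Lemma In_pairs_inv (S T R : Type) (f : S -> T -> R) (s : seq S) (t : S -> seq T) z :
  List.In z (flatten [seq [seq f x y | y <- t x] | x <- s]) ->
  exists x y, [/\ List.In x s, List.In y (t x) & z = f x y].
Proof.
elim: s => //= a s IH H; case: (List.in_app_or _ _ _ H) => [{}H|/IH].
  by case: (proj1 (List.in_map_iff _ _ _) H) => y [<- hy]; exists a, y; split => //; left.
by case=> x [y [hx hy ->]]; exists x, y; split => //; right.
Qed.

Lemma count_pairs (S T R : Type) (P : pred R) (f : S -> T -> R) (s : seq S) (t : S -> seq T) :
  count P (flatten [seq [seq f x y | y <- t x] | x <- s]) =
  \sum_(x <- s) count (fun y => P (f x y)) (t x).
Proof.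
elim: s => /= [|a s IH]; first by rewrite big_nil.
by rewrite count_cat big_cons IH count_map.
Qed.

Lemma eq_In_count (T : Type) (p p' : pred T) (l : seq T) :
  (forall x, List.In x l -> p x = p' x) -> count p l = count p' l.
Proof.
elim: l => //= a l IH H; rewrite H; last by left.
by rewrite IH // => x hx; apply: H; right.
Qed.

Lemma eq_In_bigsum (T : Type) (f g : T -> nat) (l : seq T) :
  (forall x, List.In x l -> f x = g x) -> \sum_(x <- l) f x = \sum_(x <- l) g x.
Proof.
elim: l => [|a l IH] H; first by rewrite !big_nil.
rewrite !big_cons H; last by left.
by rewrite IH // => x hx; apply: H; right.
Qed.

Lemma sum_delta (X : Type) (LX : seq X) (z : X) (h : X -> nat) :
  List.NoDup LX -> List.In z LX -> \sum_(y <- LX) asb (z = y) * h y = h z.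
Proof.
elim: LX => //= a l IH nd; inversion nd; subst.
rewrite big_cons; case=> [<-|hz].
  rewrite asbT // mul1n (eq_In_bigsum (g := fun _ => 0)) ?big1 ?addn0 // => y yl.
  by rewrite asbF ?mul0n // => e; subst.
rewrite asbF ?mul0n ?add0n ?IH //.
by move=> e; subst.
Qed.


Lemma choices_in (T : Type) k : forall (L : 'I_k -> seq T) g,
  List.In g (choices L) -> forall i, List.In (g i) (L i).
Proof.
elim: k => [|k IH] L g /=.
  by move=> _ [].
move=> H i; case: (In_pairs_inv H) => x [g' [hx hg' e]]; subst g.
case: (unliftP ord0 i) => [j ->|->].
  exact: (IH _ _ hg').
by [].
Qed.

Definition cfun (T : Type) k (x : T) (g : 'I_k -> T) : 'I_k.+1 -> T :=
  fun i => match unlift ord0 i with Some j => g j | None => x end.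

Lemma choicesS (T : Type) k (L : 'I_k.+1 -> seq T) :
  choices L = [seq cfun x g | x <- L ord0, g <- choices (fun j => L (lift ord0 j))].
Proof. by []. Qed.

Lemma cfun0 (T : Type) k (x : T) (g : 'I_k -> T) : cfun x g ord0 = x.
Proof. by rewrite /cfun unlift_none. Qed.

Lemma cfunS (T : Type) k (x : T) (g : 'I_k -> T) j : cfun x g (lift ord0 j) = g j.
Proof. by rewrite /cfun liftK. Qed.

Lemma choices_count_all (T : Type) k : forall (L : 'I_k -> seq T) (p : 'I_k -> pred T),
  count (fun g => [forall i, p i (g i)]) (choices L) = \prod_(i < k) count (p i) (L i).
Proof.
elim: k => [|k IH] L p.
  rewrite big_ord0 /=.
  by have -> : [forall i, p i (False_rect T (notF (ltn_ord i)))] by apply/forallP => -[].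
rewrite choicesS count_pairs big_ord_recl -(IH (fun j => L (lift ord0 j)) (fun j => p (lift ord0 j))).
rewrite (eq_bigr (fun x => p ord0 x * count (fun g => [forall i, p (lift ord0 i) (g i)]) (choices (fun j => L (lift ord0 j))))) => [|x _]; last first.
  case px: (p ord0 x).
    rewrite mul1n; apply: eq_count => y; apply/forallP/forallP => H i.
      by have := H (lift ord0 i); rewrite cfunS.
    by case: (unliftP ord0 i) => [j ->|->]; rewrite ?cfunS ?cfun0.
  rewrite mul0n -(count_pred0 (choices (fun j => L (lift ord0 j)))); apply: eq_count => y.
  by apply/negbTE/forallPn; exists ord0; rewrite cfun0 px.
elim: (L ord0) => [|a l IHl]; first by rewrite big_nil.
by rewrite big_cons IHl /= mulnDl.
Qed.

Lemma sum_group (T X : Type) (lab : T -> X) (LX : seq X) (h : X -> nat) (l : seq T) :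
  List.NoDup LX -> (forall x, List.In x l -> List.In (lab x) LX) ->
  \sum_(x <- l) h (lab x) = \sum_(y <- LX) count (fun t => asb (lab t = y)) l * h y.
Proof.
move=> nd; elim: l => [|a l IH] H.
  by rewrite big_nil big1.
rewrite big_cons IH; last by move=> x hx; apply: H; right.
transitivity (\sum_(y <- LX) (asb (lab a = y) * h y + count (fun t => asb (lab t = y)) l * h y)).
  by rewrite big_split /= sum_delta //; apply: H; left.
by apply: eq_bigr => y _ /=; rewrite mulnDl.
Qed.

Lemma J_sum (J : nat -> nat) (HJJ : forall a, J (J a) = J a)
  (HJadd : forall a b, J (a + b) = J (J a + J b)) (T : Type) (l : seq T) (f : T -> nat) :
  J (\sum_(x <- l) f x) = J (\sum_(x <- l) J (f x)).
Proof.
elim: l => [|a l IH]; first by rewrite !big_nil.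
by rewrite !big_cons HJadd IH -HJadd [in RHS]HJadd HJJ -HJadd.
Qed.

Lemma choices_cong (T X : Type) (J : nat -> nat) (HJJ : forall a, J (J a) = J a)
  (HJadd : forall a b, J (a + b) = J (J a + J b))
  (HJmul : forall a b, J (a * b) = J (J a * J b))
  (lab : T -> X) (LX : seq X) (HLX : List.NoDup LX) k :
  forall (L L' : 'I_k -> seq T) (P : ('I_k -> X) -> bool),
  (forall i t, List.In t (L i) -> List.In (lab t) LX) ->
  (forall i t, List.In t (L' i) -> List.In (lab t) LX) ->
  (forall i y, List.In y LX -> J (count (fun t => asb (lab t = y)) (L i)) =
                                J (count (fun t => asb (lab t = y)) (L' i))) ->
  J (count (fun g => P (fun i => lab (g i))) (choices L)) =
  J (count (fun g => P (fun i => lab (g i))) (choices L')).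
Proof.
elim: k => [|k IH] L L' P HL HL' HC; first by [].
rewrite !choicesS !count_pairs.
pose mk (y : X) (v : 'I_k -> X) (i : 'I_k.+1) :=
  match unlift ord0 i with Some j => v j | None => y end.
pose h (M : 'I_k.+1 -> seq T) y :=
  count (fun g => P (mk y (fun j => lab (g j)))) (choices (fun j => M (lift ord0 j))).
have E : forall M x, count (fun y => P (fun i => lab (cfun x y i)))
     (choices (fun j => M (lift ord0 j))) = h M (lab x).
  move=> M x; apply: eq_count => g; congr P; apply: functional_extensionality => i.
  by rewrite /mk /cfun; case: (unlift ord0 i).
rewrite (eq_bigr (fun x => h L (lab x))) => [|x _]; last exact: E.
rewrite [in RHS](eq_bigr (fun x => h L' (lab x))) => [|x _]; last exact: E.
rewrite (@sum_group _ _ lab LX (h L) _ HLX); last by move=> x; apply: HL.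
rewrite [in RHS](@sum_group _ _ lab LX (h L') _ HLX); last by move=> x; apply: HL'.
rewrite J_sum // [in RHS]J_sum //; congr J.
apply: eq_In_bigsum => y hy.
rewrite HJmul [in RHS]HJmul HC //; congr (J (_ * _)).
rewrite /h (IH (fun j => L (lift ord0 j)) (fun j => L' (lift ord0 j)) (fun v => P (mk y v))) //.
- by move=> i t; apply: HL.
- by move=> i t; apply: HL'.
- by move=> i y'; apply: HC.
Qed.


Ltac dHB HB := case: HB => addA [addC [add0 [addr0 [mulA [mul1 [mulr1 [n01 [mul0 mulr0]]]]]]]].

Lemma bsum0 (B : bimonoid) (HB : strong_bimonoid B) (T : Type) (l : seq T) :
  \big[badd B/bzero B]_(x <- l) bzero B = bzero B.
Proof. dHB HB; elim: l => [|a l IH]; by rewrite ?big_nil ?big_cons ?IH ?add0. Qed.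

Lemma bsum_In_eq (B : bimonoid) (T : Type) (l : seq T) (f g : T -> B) :
  (forall x, List.In x l -> f x = g x) ->
  \big[badd B/bzero B]_(x <- l) f x = \big[badd B/bzero B]_(x <- l) g x.
Proof.
elim: l => [|a l IH] H; first by rewrite !big_nil.
rewrite !big_cons H; last by left.
by rewrite IH // => x hx; apply: H; right.
Qed.

Lemma bsum_split (B : bimonoid) (HB : strong_bimonoid B) (T : Type) (l : seq T) (f g : T -> B) :
  \big[badd B/bzero B]_(x <- l) badd B (f x) (g x) =
  badd B (\big[badd B/bzero B]_(x <- l) f x) (\big[badd B/bzero B]_(x <- l) g x).
Proof.
dHB HB; elim: l => [|a l IH]; first by rewrite !big_nil add0.
rewrite !big_cons IH -!addA; congr (badd B (f a)).
by rewrite addA [badd B (g a) _]addC -addA.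
Qed.

Lemma bsum_if (B : bimonoid) (HB : strong_bimonoid B) (T : Type) (l : seq T) (c : bool) (f : T -> B) :
  \big[badd B/bzero B]_(x <- l) (if c then f x else bzero B) =
  if c then \big[badd B/bzero B]_(x <- l) f x else bzero B.
Proof. by case: c; rewrite ?bsum0. Qed.

Lemma bsum_delta (B : bimonoid) (HB : strong_bimonoid B) (X : Type) (LX : seq X) (z : X) (f : X -> B) :
  List.NoDup LX -> List.In z LX ->
  \big[badd B/bzero B]_(y <- LX) (if asb (z = y) then f y else bzero B) = f z.
Proof.
have HB' := HB; dHB HB'.
elim: LX => //= a l IH nd; inversion nd; subst.
rewrite big_cons; case=> [<-|hz].
  rewrite asbT // (bsum_In_eq (g := fun _ => bzero B)) ?bsum0 ?addr0 // => y yl.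
  by rewrite asbF // => e; subst.
rewrite asbF ?add0 ?IH //.
by move=> e; subst.
Qed.

Lemma bsum_count (B : bimonoid) (HB : strong_bimonoid B) (T : Type) (l : seq T) (p : pred T) (v : B) :
  \big[badd B/bzero B]_(x <- l) (if p x then v else bzero B) = nsum (count p l) v.
Proof.
dHB HB; elim: l => [|a l IH]; first by rewrite big_nil.
by rewrite big_cons IH /=; case: (p a) => //=; rewrite add0.
Qed.

Lemma nsum_add (B : bimonoid) m n (c : B) : nsum (m + n) c = iter m (badd B c) (nsum n c).
Proof. by rewrite /nsum iterD. Qed.

Lemma fin_order (B : bimonoid) (Hlf : locally_finite (badd B) (bzero B)) (c : B) :
  exists i k, [/\ (1 <= i)%N, (1 <= k)%N & nsum i c = nsum (i + k) c].
Proof.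
case: (Hlf [:: c]) => l Hl.
have Hin : forall n, List.In (nsum n c) l.
  move=> n; apply: Hl; elim: n => [|n IH]; first exact: gen_unit.
  by apply: gen_op => //; apply: gen_elem; left.
pose g n := find (fun x => asb (x = nsum n c)) l.
have hasg : forall n, has (fun x => asb (x = nsum n c)) l.
  move=> n; have := Hin n; elim: l {Hl Hin g} => //= a l IH [->|h].
    by rewrite asbT.
  by rewrite IH ?orbT.
have gE : forall n, nth (bzero B) l (g n) = nsum n c.
  by move=> n; apply/asbP; apply: (nth_find _ (hasg n)).
have glt : forall n, (g n < size l)%N by move=> n; rewrite -has_find.
have : ~~ uniq (map g (iota 0 (size l).+1)).
  apply/negP => U.
  have := uniq_leq_size U (s2 := iota 0 (size l)).
  rewrite size_map !size_iota ltnn => H; suff : false by []; apply: H => x /mapP [n _ ->].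
  by rewrite mem_iota add0n glt.
case/(uniqPn 0) => i [j [ij jl]]; rewrite size_map size_iota in jl.
rewrite !(nth_map 0) ?size_iota ?(ltn_trans ij) // !nth_iota ?(ltn_trans ij) // !add0n => gij.
exists i.+1, (j - i); split => //; first by rewrite subn_gt0.
rewrite addSn subnKC ?(ltnW ij) //.
by rewrite /nsum /= -/(nsum i c) -/(nsum j c) -gE gij gE.
Qed.

Lemma nsum_period (B : bimonoid) (c : B) i p :
  nsum i c = nsum (i + p) c -> forall m, nsum (i + m) c = nsum (i + m %% p) c.
Proof.
move=> H.
have H1 : forall m, nsum (i + m + p) c = nsum (i + m) c.
  move=> m; have -> : i + m + p = m + (i + p) by rewrite addnAC addnC.
  by rewrite nsum_add -H -nsum_add addnC.
move=> m; rewrite {1}(divn_eq m p) [_ + m %% p]addnC.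
elim: (m %/ p) => [|k IH]; first by rewrite mul0n addn0.
by rewrite mulSnr (addnA (m %% p)) (addnA i) H1 IH.
Qed.

Lemma index_spec (B : bimonoid) (Hlf : locally_finite (badd B) (bzero B)) (c : B) :
  (1 <= index_of c)%N /\ (1 <= period_of c)%N /\
  nsum (index_of c) c = nsum (index_of c + period_of c) c.
Proof.
have ex0 : exists i, (1 <= i)%N /\ exists k, (1 <= k)%N /\ nsum i c = nsum (i + k) c.
  by have [i [k [a b e]]] := fin_order Hlf c; exists i; split => //; exists k.
have [ex1 _] := least_spec ex0.
rewrite -/(index_of c) in ex1.
case: ex1 => i1 [k [k1 ek]].
have [[p1 ep] _] := least_spec (ex_intro (fun p => (1 <= p)%N /\
   nsum (index_of c) c = nsum (index_of c + p) c) k (conj k1 ek)).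
by rewrite -/(period_of c) in p1 ep.
Qed.


Lemma In_flat (S T : Type) (L : S -> seq T) (s : seq S) x y :
  List.In x s -> List.In y (L x) -> List.In y (flatten [seq [seq z | z <- L x] | x <- s]).
Proof. by move=> hx hy; exact: (In_pairs (fun _ z => z) (t := L) hx hy). Qed.

Lemma HA_list_spec (Sigma : finType) (rk : Sigma -> nat) (B : bimonoid) (Q : finType)
  (delta : forall s : Sigma, ('I_(rk s) -> Q) -> Q -> B)
  (Hmul : locally_finite (bmul B) (bone B)) :
  List.NoDup (HA_list delta) /\ forall b, List.In b (HA_list delta) <-> HA delta b.
Proof.
pose L (s : Sigma) := [seq delta s (fun i => f i) q | f : {ffun 'I_(rk s) -> Q} <- enum {ffun 'I_(rk s) -> Q}, q <- enum Q].
pose gens := flatten [seq [seq z | z <- L s] | s <- enum Sigma].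
have Hg : forall s qs q, List.In (delta s qs q) gens.
  move=> s qs q; apply: (In_flat (L := L)); first exact/mem_In/mem_enum.
  have -> : delta s qs q = delta s (fun i => [ffun i => qs i] i) q.
    by congr (delta s _ q); apply: functional_extensionality => i; rewrite ffunE.
  apply: (In_pairs (fun (f : {ffun 'I_(rk s) -> Q}) q => delta s (fun i => f i) q) (t := fun _ => enum Q)); apply/mem_In/mem_enum.
have [l Hl] := Hmul gens.
have Hc : forall b, HA delta b -> List.In b l.
  move=> b hb; apply: Hl; elim: hb => [s qs q|a b' _ ha _ hb'].
    by apply: gen_elem.
  exact: gen_op.
have ex := finite_NoDup Hc.
exact: (epsilon_spec (inhabits [::]) (fun l => List.NoDup l /\ forall b, List.In b l <-> HA delta b) ex).
Qed.

Lemma big_HA (Sigma : finType) (rk : Sigma -> nat) (B : bimonoid) (Q : finType)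
  (delta : forall s : Sigma, ('I_(rk s) -> Q) -> Q -> B) (HB : strong_bimonoid B) k (f : 'I_k -> B) :
  (forall i, HA delta (f i)) ->
  \big[bmul B/bone B]_(i < k) f i = bone B \/ HA delta (\big[bmul B/bone B]_(i < k) f i).
Proof.
dHB HB => H; apply: (big_ind (fun x => x = bone B \/ HA delta x)); first by left.
  move=> x y [->|hx] [->|hy]; rewrite ?mul1 ?mulr1; try by [left|right].
  by right; apply: HA_mul.
by move=> i _; right.
Qed.

Lemma run_wt_HA (Sigma : finType) (rk : Sigma -> nat) (B : bimonoid) (Q : finType)
  (delta : forall s : Sigma, ('I_(rk s) -> Q) -> Q -> B) (F : Q -> B) (HB : strong_bimonoid B)
  (r : run (wta_of delta F)) : HA delta (run_wt r).
Proof.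
have HB' := HB; dHB HB'.
elim: r => -[s q] g IH /=.
have [||h] := @big_HA _ _ _ _ delta HB _ (fun i => run_wt (g i)).
- by move=> i; apply: IH.
- by move=> ->; rewrite mul1; apply: HA_im.
- by apply: HA_mul => //; apply: HA_im.
Qed.

Lemma list_max (X : Type) (l : seq X) (f : X -> nat) : exists n, forall x, List.In x l -> (f x <= n)%N.
Proof.
elim: l => [|a l [n IH]]; first by exists 0.
exists (maxn (f a) n) => x [<-|hx]; first by rewrite leq_maxl.
by rewrite (leq_trans (IH x hx)) // leq_maxr.
Qed.

Lemma list_lcm (X : Type) (l : seq X) (f : X -> nat) : (forall x, 1 <= f x)%N ->
  exists n, (1 <= n)%N /\ forall x, List.In x l -> (f x %| n)%N.
Proof.
move=> Hf; elim: l => [|a l [n [n1 IH]]]; first by exists 1.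
exists (f a * n); split; first by rewrite muln_gt0 Hf.
by move=> x [<-|hx]; [rewrite dvdn_mulr | rewrite dvdn_mull ?IH].
Qed.

Lemma HAF_list (Sigma : finType) (rk : Sigma -> nat) (B : bimonoid) (Q : finType)
  (delta : forall s : Sigma, ('I_(rk s) -> Q) -> Q -> B) (F : Q -> B)
  (Hmul : locally_finite (bmul B) (bone B)) :
  exists l, forall b, HAF delta F b -> List.In b l.
Proof.
exists [seq bmul B h (F q) | h <- HA_list delta, q <- enum Q].
move=> b [h [q [hh ->]]].
apply: (In_pairs (fun h q => bmul B h (F q))); first exact/(proj2 (HA_list_spec delta Hmul)).
exact/mem_In/mem_enum.
Qed.

Lemma iA_spec (Sigma : finType) (rk : Sigma -> nat) (B : bimonoid) (Q : finType)
  (delta : forall s : Sigma, ('I_(rk s) -> Q) -> Q -> B) (F : Q -> B)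
  (Hmul : locally_finite (bmul B) (bone B)) :
  forall b, HAF delta F b -> (index_of b <= iA delta F)%N.
Proof.
have [l Hl] := HAF_list delta F Hmul.
have [n Hn] := list_max l (@index_of B).
have [H _] := least_spec (ex_intro (fun n => forall b, HAF delta F b -> (index_of b <= n)%N) n
   (fun b hb => Hn b (Hl b hb))).
exact: H.
Qed.

Lemma pA_spec (Sigma : finType) (rk : Sigma -> nat) (B : bimonoid) (Q : finType)
  (delta : forall s : Sigma, ('I_(rk s) -> Q) -> Q -> B) (F : Q -> B)
  (Hadd : locally_finite (badd B) (bzero B)) (Hmul : locally_finite (bmul B) (bone B)) :
  (1 <= pA delta F)%N /\ forall b, HAF delta F b -> (period_of b %| pA delta F)%N.
Proof.
have [l Hl] := HAF_list delta F Hmul.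
have [n [n1 Hn]] := @list_lcm _ l (@period_of B) (fun x => proj1 (proj2 (index_spec Hadd x))).
have [H _] := least_spec (ex_intro (fun n => (1 <= n)%N /\ forall b, HAF delta F b -> (period_of b %| n)%N) n
   (conj n1 (fun b hb => Hn b (Hl b hb)))).
exact: H.
Qed.

Definition Jgen (i p n : nat) : nat := if (n < i)%N then n else (i + (n - i) %% p)%N.

Lemma Jmod i p n : Jgen i p n = n %[mod p].
Proof.
rewrite /Jgen; case: ltnP => // h.
by rewrite modnDmr subnKC.
Qed.

Lemma Jge i p n : (i <= Jgen i p n)%N = (i <= n)%N.
Proof. by rewrite /Jgen; case: ltnP => h; rewrite ?leq_addr // leqNgt h. Qed.

Lemma Jlt i p n : (n < i)%N -> Jgen i p n = n.
Proof. by rewrite /Jgen => ->. Qed.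

Lemma Jeq i p x y : (i <= x)%N -> (i <= y)%N -> x = y %[mod p] -> Jgen i p x = Jgen i p y.
Proof.
move=> hx hy E; rewrite /Jgen ltnNge hx ltnNge hy /=; congr addn.
have /eqP : (i + (x - i)) = (i + (y - i)) %[mod p] by rewrite !subnKC.
by rewrite eqn_modDl => /eqP.
Qed.

Lemma JJ i p n : Jgen i p (Jgen i p n) = Jgen i p n.
Proof.
case: (ltnP n i) => h; first by rewrite !Jlt.
by apply: Jeq; rewrite ?Jge ?Jmod.
Qed.

Lemma Jadd i p a b : Jgen i p (a + b) = Jgen i p (Jgen i p a + Jgen i p b).
Proof.
case: (boolP ((a < i) && (b < i))%N) => [/andP [ha hb]|h]; first by rewrite (Jlt _ ha) (Jlt _ hb).
move: h; rewrite negb_and -!leqNgt => h.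
have hab : (i <= a + b)%N.
  by case/orP: h => h; [exact: leq_trans h (leq_addr _ _) | exact: leq_trans h (leq_addl _ _)].
have hJ : (i <= Jgen i p a + Jgen i p b)%N.
  by case/orP: h => h; [apply: leq_trans (leq_addr _ _) | apply: leq_trans (leq_addl _ _)]; rewrite Jge.
apply: Jeq => //.
by rewrite -modnDm -[in RHS]modnDm !Jmod.
Qed.

Lemma J0 i p : Jgen i p 0 = 0.
Proof. by rewrite /Jgen; case: i => //=; rewrite mod0n. Qed.

Lemma Jpos i p n : (0 < n)%N -> (0 < i)%N -> (0 < Jgen i p n)%N.
Proof.
move=> n0 i0; case: (ltnP n i) => h; first by rewrite Jlt.
by apply: leq_trans i0 _; rewrite Jge.
Qed.

Lemma Jmul i p a b : Jgen i p (a * b) = Jgen i p (Jgen i p a * Jgen i p b).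
Proof.
case: (boolP ((a < i) && (b < i))%N) => [/andP [ha hb]|h]; first by rewrite (Jlt _ ha) (Jlt _ hb).
case: (posnP a) => [->|a0]; first by rewrite !mul0n J0 mul0n J0.
case: (posnP b) => [->|b0]; first by rewrite !muln0 J0 muln0 J0.
move: h; rewrite negb_and -!leqNgt => h.
have hab : (i <= a * b)%N.
  by case/orP: h => h; [exact: leq_trans h (leq_pmulr _ b0) | exact: leq_trans h (leq_pmull _ a0)].
have hJ : (i <= Jgen i p a * Jgen i p b)%N.
  case: (posnP i) => [->//|i0].
  case/orP: h => h.
    by apply: leq_trans (leq_pmulr _ (Jpos p b0 i0)); rewrite Jge.
  by apply: leq_trans (leq_pmull _ (Jpos p a0 i0)); rewrite Jge.
apply: Jeq => //.
by rewrite -modnMm -[in RHS]modnMm !Jmod.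
Qed.

Lemma JA_nsum (Sigma : finType) (rk : Sigma -> nat) (B : bimonoid) (Q : finType)
  (delta : forall s : Sigma, ('I_(rk s) -> Q) -> Q -> B) (F : Q -> B)
  (Hadd : locally_finite (badd B) (bzero B)) (Hmul : locally_finite (bmul B) (bone B)) c n :
  HAF delta F c -> nsum (JA delta F n) c = nsum n c.
Proof.
move=> hc; rewrite /JA; case: ltnP => // hn.
have hi := iA_spec Hmul hc.
have [_ hp] := pA_spec delta F Hadd Hmul; have hp' := hp c hc.
have [_ [_ E]] := index_spec Hadd c.
have P := nsum_period E.
set i := index_of c in hi P hp' *; set p := period_of c in P hp' *.
set I := iA delta F in hi hn *; set PA := pA delta F in hp' *.
have e1 : n = (i + (n - i))%N by rewrite subnKC // (leq_trans hi hn).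
have e2 : (I + (n - I) %% PA = i + (I - i + (n - I) %% PA))%N by rewrite addnA subnKC.
rewrite e2 [in RHS]e1 P [in RHS]P; congr (nsum (i + _) c).
rewrite -modnDmr (modn_dvdm _ hp') modnDmr.
by rewrite addnBAC // subnKC.
Qed.


Lemma eq_asb (T : eqType) (x y : T) : (x == y) = asb (x = y).
Proof. by apply/eqP/asbP. Qed.

Lemma asb_pair (T : eqType) (X : Type) (a q : T) (b h : X) :
  asb ((a, b) = (q, h)) = (a == q) && asb (b = h).
Proof.
apply/asbP/andP => [[-> ->]|[/eqP -> /asbP ->]] //; split => //; exact/asbP.
Qed.

Lemma JA_J (Sigma : finType) (rk : Sigma -> nat) (B : bimonoid) (Q : finType)
  (delta : forall s : Sigma, ('I_(rk s) -> Q) -> Q -> B) (F : Q -> B) n :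
  JA delta F n = Jgen (iA delta F) (pA delta F) n.
Proof. by []. Qed.

Lemma LX_ex (Sigma : finType) (rk : Sigma -> nat) (B : bimonoid) (Q : finType)
  (delta : forall s : Sigma, ('I_(rk s) -> Q) -> Q -> B)
  (Hmul : locally_finite (bmul B) (bone B)) :
  exists LX : seq (Q * B), List.NoDup LX /\
    forall y, List.In y LX <-> exists q h, y = (q, h) /\ HA delta h.
Proof.
apply: (finite_NoDup (l := [seq (q, h) | q <- enum Q, h <- HA_list delta])).
move=> y [q [h [-> hh]]].
apply: (In_pairs (fun q h => (q, h))); first exact/mem_In/mem_enum.
exact/(proj2 (HA_list_spec delta Hmul)).
Qed.

Lemma pcount_cong (Sigma : finType) (rk : Sigma -> nat) (B : bimonoid) (Q : finType)
  (delta : forall s : Sigma, ('I_(rk s) -> Q) -> Q -> B) (F : Q -> B)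
  (HB : strong_bimonoid B) (Hmul : locally_finite (bmul B) (bone B))
  s (ts ts' : 'I_(rk s) -> tree rk) :
  (forall i, piA delta F (ts i) = piA delta F (ts' i)) ->
  forall q b, JA delta F (pcount delta F (Node s ts) q b) = JA delta F (pcount delta F (Node s ts') q b).
Proof.
move=> H q b.
have [LX [ndLX HLX]] := LX_ex delta Hmul.
rewrite /pcount /= !(count_pairs _ (fun (q : Q) (g : 'I_(rk s) -> run (wta_of delta F)) => (Node (s, q) g : run (wta_of delta F)))) !JA_J.
rewrite J_sum; [|exact: JJ|exact: Jadd].
rewrite [in RHS]J_sum; [|exact: JJ|exact: Jadd].
congr Jgen; apply: eq_bigr => q' _.
pose lab (r : run (wta_of delta F)) := (run_root r, run_wt r).
pose Pv (v : 'I_(rk s) -> Q * B) := (q' == q) &&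
   asb (bmul B (\big[bmul B/bone B]_(i < rk s) (v i).2) (delta s (fun i => (v i).1) q') = b).
rewrite !(eq_count (a2 := fun g => Pv (fun i => lab (g i)))) //.
apply: (@choices_cong _ _ _ (@JJ _ _) (@Jadd _ _) (@Jmul _ _) lab LX ndLX _ _ _ Pv).
- move=> i t _; apply/HLX; exists (run_root t), (run_wt t); split => //.
  exact: run_wt_HA.
- move=> i t _; apply/HLX; exists (run_root t), (run_wt t); split => //.
  exact: run_wt_HA.
move=> i y /HLX [q0 [h [-> hh]]].
have E : forall t, count (fun r => asb (lab r = (q0, h))) (runs (wta_of delta F) t) =
                   pcount delta F t q0 h.
  by move=> t; apply: eq_count => r; rewrite /lab asb_pair.
rewrite !E.
have := congr1 (fun pi => pi q0 h) (H i); rewrite /piA asbT //.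
Qed.

Lemma piA_cong (Sigma : finType) (rk : Sigma -> nat) (B : bimonoid) (Q : finType)
  (delta : forall s : Sigma, ('I_(rk s) -> Q) -> Q -> B) (F : Q -> B)
  (HB : strong_bimonoid B) (Hmul : locally_finite (bmul B) (bone B))
  s (ts ts' : 'I_(rk s) -> tree rk) :
  (forall i, piA delta F (ts i) = piA delta F (ts' i)) ->
  piA delta F (Node s ts) = piA delta F (Node s ts').
Proof.
move=> H; apply: functional_extensionality => q; apply: functional_extensionality => b.
by rewrite /piA; case: asbP => // _; apply: pcount_cong.
Qed.


Lemma piA_lt (Sigma : finType) (rk : Sigma -> nat) (B : bimonoid) (Q : finType)
  (delta : forall s : Sigma, ('I_(rk s) -> Q) -> Q -> B) (F : Q -> B)
  (Hadd : locally_finite (badd B) (bzero B)) (Hmul : locally_finite (bmul B) (bone B))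
  t q b : (piA delta F t q b < iA delta F + pA delta F)%N.
Proof.
have [p1 _] := pA_spec delta F Hadd Hmul.
rewrite /piA; case: asb; last by rewrite (leq_trans p1) ?leq_addl.
rewrite /JA; case: (ltnP (pcount delta F t q b) (iA delta F)) => h.
  by apply: leq_trans h _; rewrite leq_addr.
by rewrite ltn_add2l ltn_pmod.
Qed.

Lemma R_states_spec (Sigma : finType) (rk : Sigma -> nat) (B : bimonoid) (Q : finType)
  (delta : forall s : Sigma, ('I_(rk s) -> Q) -> Q -> B) (F : Q -> B)
  (Hadd : locally_finite (badd B) (bzero B)) (Hmul : locally_finite (bmul B) (bone B)) :
  List.NoDup (R_states delta F) /\
  forall pi, List.In pi (R_states delta F) <-> exists t, pi = piA delta F t.
Proof.
pose m := size (HA_list delta).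
pose N := (iA delta F + pA delta F)%N.
pose C := {ffun Q -> {ffun 'I_m -> 'I_N}}.
pose pos b := find (fun x => asb (x = b)) (HA_list delta).
pose decode (f : C) : Qr B Q := fun q b =>
  if asb (HA delta b) then oapp (fun i : 'I_m => (f q i : nat)) 0%N (insub (pos b)) else 0%N.
pose encode (t : tree rk) : C :=
  [ffun q => [ffun i : 'I_m => Ordinal (piA_lt delta F Hadd Hmul t q (nth (bzero B) (HA_list delta) i))]].
have DE : forall t, decode (encode t) = piA delta F t.
  move=> t; apply: functional_extensionality => q; apply: functional_extensionality => b.
  rewrite /decode; case: asbP => hb; last by rewrite /piA asbF.
  have hin : List.In b (HA_list delta) by apply/(proj2 (HA_list_spec delta Hmul)).
  have hasb : has (fun x => asb (x = b)) (HA_list delta).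
    elim: (HA_list delta) hin => //= a l IH [->|h]; first by rewrite asbT.
    by rewrite IH ?orbT.
  case: insubP => [j _ vj|]; last by rewrite -has_find hasb.
  rewrite /encode !ffunE /= ffunE /=; congr (piA delta F t q _).
  by apply/asbP; rewrite vj; apply: (nth_find (bzero B) hasb).
have ex : exists l, List.NoDup l /\ forall pi, List.In pi l <-> exists t, pi = piA delta F t.
  apply: (finite_NoDup (l := map decode (enum C))).
  move=> pi [t ->]; rewrite -DE; apply: List.in_map; exact/mem_In/mem_enum.
exact: (epsilon_spec (inhabits [::]) (fun l => List.NoDup l /\
   forall pi, List.In pi l <-> exists t, pi = piA delta F t) ex).
Qed.

Lemma rep_spec (Sigma : finType) (rk : Sigma -> nat) (B : bimonoid) (Q : finType)
  (delta : forall s : Sigma, ('I_(rk s) -> Q) -> Q -> B) (F : Q -> B) t :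
  exists t', rep delta F (piA delta F t) = Some t' /\ piA delta F t' = piA delta F t.
Proof.
have := epsilon_spec (inhabits None)
  (fun o => if o is Some t' then piA delta F t' = piA delta F t else False)
  (ex_intro _ (Some t) erefl).
rewrite -[epsilon _ _]/(rep delta F (piA delta F t)).
by case: (rep delta F (piA delta F t)) => // t' e; exists t'.
Qed.

Lemma R_delta_piA (Sigma : finType) (rk : Sigma -> nat) (B : bimonoid) (Q : finType)
  (delta : forall s : Sigma, ('I_(rk s) -> Q) -> Q -> B) (F : Q -> B)
  (HB : strong_bimonoid B) (Hmul : locally_finite (bmul B) (bone B))
  s (ts : 'I_(rk s) -> tree rk) pi :
  R_delta delta F (fun i => piA delta F (ts i)) pi =
  if asb (piA delta F (Node s ts) = pi) then bone B else bzero B.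
Proof.
rewrite /R_delta; congr (if _ then _ else _); apply/asbP/asbP.
  case=> ts' [hrep ->]; apply: piA_cong => // i.
  have [t' [e1 e2]] := rep_spec delta F (ts i).
  by move: (hrep i); rewrite e1 => -[<-].
move=> <-; exists (fun i => odflt (ts i) (rep delta F (piA delta F (ts i)))); split.
  by move=> i; have [t' [-> _]] := rep_spec delta F (ts i).
apply: piA_cong => // i.
by have [t' [-> ->]] := rep_spec delta F (ts i).
Qed.

Lemma prod_zero (B : bimonoid) (HB : strong_bimonoid B) k (f : 'I_k -> B) :
  (exists i, f i = bzero B) -> \big[bmul B/bone B]_(i < k) f i = bzero B.
Proof.
dHB HB; elim: k f => [|k IH] f [i hi]; first by move: hi; case: i.
rewrite big_ord_recl; move: hi; case: (unliftP ord0 i) => [j ->|->] hi.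
  by rewrite IH ?mulr0 //; exists j.
by rewrite hi mul0.
Qed.

Lemma prod_one (B : bimonoid) (HB : strong_bimonoid B) k (f : 'I_k -> B) :
  (forall i, f i = bone B) -> \big[bmul B/bone B]_(i < k) f i = bone B.
Proof.
dHB HB => H; apply: (big_ind (fun x => x = bone B)) => //.
by move=> x y -> ->; rewrite mul1.
Qed.


Lemma R_claim_a (Sigma : finType) (rk : Sigma -> nat) (B : bimonoid) (Q : finType)
  (delta : forall s : Sigma, ('I_(rk s) -> Q) -> Q -> B) (F : Q -> B)
  (HB : strong_bimonoid B) (Hmul : locally_finite (bmul B) (bone B)) xi :
  forall r, List.In r (runs (R_of delta F) xi) ->
  run_wt r = bzero B \/ (run_wt r = bone B /\ run_root r = piA delta F xi).
Proof.
have HB' := HB; dHB HB'.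
elim: xi => s ts IH r /= Hr.
case: (In_pairs_inv (f := fun (pi : Qr B Q) (g : 'I_(rk s) -> run (R_of delta F)) =>
   (Node (s, pi) g : run (R_of delta F))) Hr) => pi [g [hpi hg ->]] {Hr}.
have Hc := choices_in hg.
rewrite /=.
case: (classic (exists i, run_wt (g i) = bzero B)) => [hz|hnz].
  by left; rewrite (prod_zero HB) // mul0.
have H1 : forall i, run_wt (g i) = bone B /\ run_root (g i) = piA delta F (ts i).
  move=> i; case: (IH i (g i) (Hc i)) => // hz.
  by case: hnz; exists i.
rewrite (prod_one HB); last by move=> i; case: (H1 i).
have -> : (fun i => run_root (g i)) = (fun i => piA delta F (ts i)).
  by apply: functional_extensionality => i; case: (H1 i).
rewrite mul1 (R_delta_piA delta F HB Hmul); case: asbP => e; last by left.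
by right; split => //; rewrite e.
Qed.

Lemma count_andl (T : Type) (c : bool) (p : pred T) (l : seq T) :
  count (fun x => c && p x) l = c * count p l.
Proof. by case: c; rewrite ?mul1n ?mul0n ?count_pred0. Qed.

Lemma R_claim_b (Sigma : finType) (rk : Sigma -> nat) (B : bimonoid) (Q : finType)
  (delta : forall s : Sigma, ('I_(rk s) -> Q) -> Q -> B) (F : Q -> B)
  (HB : strong_bimonoid B) (Hadd : locally_finite (badd B) (bzero B))
  (Hmul : locally_finite (bmul B) (bone B)) xi :
  count (fun r => asb (run_wt r = bone B)) (runs (R_of delta F) xi) = 1%N.
Proof.
have HB' := HB; dHB HB'.
elim: xi => s ts IH.
rewrite /= (count_pairs _ (fun (pi : Qr B Q) (g : 'I_(rk s) -> run (R_of delta F)) =>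
   (Node (s, pi) g : run (R_of delta F)))).
have [ndR HR] := R_states_spec delta F Hadd Hmul.
transitivity (\sum_(pi <- R_states delta F) asb (piA delta F (Node s ts) = pi) * 1)%N; last first.
  by rewrite sum_delta //; apply/HR; exists (Node s ts).
apply: eq_In_bigsum => pi hpi.
rewrite (eq_In_count (p' := fun g => asb (piA delta F (Node s ts) = pi) &&
   [forall i, asb (run_wt (g i) = bone B)])).
  rewrite count_andl (choices_count_all _ (fun i r => asb (run_wt r = bone B))).
  by rewrite big1.
move=> g hg; have Hc := choices_in hg.
have Ha := fun i => R_claim_a HB Hmul (Hc i).
rewrite /=.
case: (classic (exists i, run_wt (g i) = bzero B)) => [hz|hnz].
  rewrite (prod_zero HB) // mul0 asbF //.
  case: hz => i hi.
  have -> : [forall i, asb (run_wt (g i) = bone B)] = false.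
    by apply/negbTE/forallPn; exists i; rewrite hi asbF.
  by rewrite andbF.
have H1 : forall i, run_wt (g i) = bone B /\ run_root (g i) = piA delta F (ts i).
  move=> i; case: (Ha i) => // hz.
  by case: hnz; exists i.
rewrite (prod_one HB); last by move=> i; case: (H1 i).
have -> : (fun i => run_root (g i)) = (fun i => piA delta F (ts i)).
  by apply: functional_extensionality => i; case: (H1 i).
have -> : [forall i, asb (run_wt (g i) = bone B)].
  by apply/forallP => i; case: (H1 i) => -> _; rewrite asbT.
rewrite mul1 (R_delta_piA delta F HB Hmul) andbT.
case: (asbP (piA delta F (Node s ts) = pi)) => e; first by rewrite asbT.
by rewrite asbF.
Qed.

Lemma sem_R (Sigma : finType) (rk : Sigma -> nat) (B : bimonoid) (Q : finType)
  (delta : forall s : Sigma, ('I_(rk s) -> Q) -> Q -> B) (F : Q -> B)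
  (HB : strong_bimonoid B) (Hadd : locally_finite (badd B) (bzero B))
  (Hmul : locally_finite (bmul B) (bone B)) xi :
  run_sem (R_of delta F) xi = R_fin delta F (piA delta F xi).
Proof.
have HB' := HB; dHB HB'.
rewrite /run_sem (bsum_In_eq (g := fun r => if asb (run_wt r = bone B)
   then R_fin delta F (piA delta F xi) else bzero B)).
  by rewrite bsum_count // R_claim_b //= addr0.
move=> r hr; case: (R_claim_a HB Hmul hr) => [->|[-> ->]].
  by rewrite mul0 asbF.
by rewrite mul1 asbT.
Qed.


Lemma bsum_ifand (B : bimonoid) (HB : strong_bimonoid B) (T : Type) (l : seq T) (c : bool)
  (d : pred T) (f : T -> B) :
  \big[badd B/bzero B]_(x <- l) (if c && d x then f x else bzero B) =
  if c then \big[badd B/bzero B]_(x <- l) (if d x then f x else bzero B) else bzero B.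
Proof. by case: c => //=; rewrite bsum0. Qed.

Lemma sumA_list (Sigma : finType) (rk : Sigma -> nat) (B : bimonoid) (Q : finType)
  (delta : forall s : Sigma, ('I_(rk s) -> Q) -> Q -> B) (F : Q -> B)
  (HB : strong_bimonoid B) (Hmul : locally_finite (bmul B) (bone B))
  (l : seq (run (wta_of delta F))) :
  \big[badd B/bzero B]_(r <- l) bmul B (run_wt r) (F (run_root r)) =
  \big[badd B/bzero B]_(q <- enum Q) \big[badd B/bzero B]_(b <- HA_list delta)
     nsum (count (fun r : run (wta_of delta F) => (run_root r == q :> Q) && asb (run_wt r = b)) l)
          (bmul B b (F q)).
Proof.
have HB' := HB; dHB HB'.
have [ndH HH] := HA_list_spec delta Hmul.
elim: l => [|r l IH].
  rewrite big_nil; symmetry; rewrite (eq_bigr (fun _ => bzero B)) ?(bsum0 HB) // => q _.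
  by rewrite (eq_bigr (fun _ => bzero B)) ?(bsum0 HB).
have Hn : forall (P : pred (run (wta_of delta F))) x,
    nsum (count P (r :: l)) x = badd B (if P r then x else bzero B) (nsum (count P l) x).
  move=> P x /=; case: (P r); rewrite ?add1n ?add0n //= add0 //.
rewrite big_cons IH.
symmetry.
under eq_bigr => q _ do under eq_bigr => b _ do rewrite Hn.
under eq_bigr => q _ do rewrite (bsum_split HB).
rewrite (bsum_split HB); congr (badd B _ _).
under eq_bigr => q _ do rewrite (bsum_ifand HB).
under eq_bigr => q _ do rewrite (bsum_delta HB _ ndH (proj2 (HH _) (run_wt_HA HB r))) eq_asb.
rewrite (bsum_delta HB) //; first exact/uniq_NoDup/enum_uniq.
exact/mem_In/mem_enum.
Qed.

Lemma sem_A (Sigma : finType) (rk : Sigma -> nat) (B : bimonoid) (Q : finType)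
  (delta : forall s : Sigma, ('I_(rk s) -> Q) -> Q -> B) (F : Q -> B)
  (HB : strong_bimonoid B) (Hadd : locally_finite (badd B) (bzero B))
  (Hmul : locally_finite (bmul B) (bone B)) xi :
  run_sem (wta_of delta F) xi = R_fin delta F (piA delta F xi).
Proof.
have [ndH HH] := HA_list_spec delta Hmul.
rewrite /run_sem (sumA_list HB Hmul) /R_fin; apply: eq_bigr => q _.
apply: bsum_In_eq => b hb.
rewrite /piA asbT; last exact/HH.
rewrite (JA_nsum (delta := delta) (F := F) Hadd Hmul) //.
by exists b, q; split => //; apply/HH.
Qed.

Theorem corollary7p5
  (Sigma : finType) (rk : Sigma -> nat) (Hnullary : exists s : Sigma, rk s = 0%N)
  (B : bimonoid) (HB : strong_bimonoid B) (HBlf : bi_locally_finite B)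
  (Q : finType) (HQ : (0 < #|Q|)%N)
  (delta : forall s : Sigma, ('I_(rk s) -> Q) -> Q -> B) (F : Q -> B) :
  forall xi : tree rk,
    run_sem (wta_of delta F) xi = run_sem (R_of delta F) xi.
Proof.
case: HBlf => Hadd Hmul xi.
by rewrite (sem_A delta F HB Hadd Hmul) (sem_R delta F HB Hadd Hmul).
Qed.
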